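(* Let $G=(\mathcal{Y},E,f)$ be a curl consistent weighted digraph and let $C^{(i)},C^{(j)}\in\mathcal{Y}$ be distinct with neither $(C^{(i)},C^{(j)})$ nor $(C^{(j)},C^{(i)})$ in $E$. Let $\mathcal{B}^{(ij)}$ be the set of paths in $G$ from $C^{(i)}$ to $C^{(j)}$ and $\mathcal{B}^{(ji)}$ the set of paths from $C^{(j)}$ to $C^{(i)}$ (a minimum over the empty set is $+\infty$). If $x\in\mathbb{R}$ is such that the weighted digraph obtained from $G$ by adding the edge $(C^{(i)},C^{(j)})$ with weight $x$ is curl consistent, then $$1-\min_{\overline{B}\in\mathcal{B}^{(ji)}}W(G,\overline{B})<x<\min_{B\in\mathcal{B}^{(ij)}}W(G,B).$$
   Context: A weighted digraph $G=(\mathcal{Y},E,f)$ has $E$ a set of ordered pairs of distinct vertices and $f:E\to\mathbb{R}$, extended to reversed pairs by $f(b,a)=1-f(a,b)$; an edge may be traversed in either direction using this convention. A cycle is a sequence $(c_1,\dots,c_\ell)$ of $\ell\ge3$ pairwise distinct vertices with each consecutive pair and $(c_\ell,c_1)$ an edge in either direction; its curl is $f(c_\ell,c_1)+\sum_{t=1}^{\ell-1}f(c_t,c_{t+1})$. $G$ is curl consistent (a CCWD) if every cycle of length $\ell$ has curl strictly between $1$ and $\ell-1$. A path $B=(b_1,\dots,b_q)$ is a sequence of pairwise distinct vertices with consecutive pairs edges (in either direction); its weight is $W(G,B)=\sum_{t=1}^{q-1}f(b_t,b_{t+1})$. *)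

(* Defs.v *)
From mathcomp Require Import all_boot all_order all_algebra.
From mathcomp Require Import reals.
Set Implicit Arguments. Unset Strict Implicit. Unset Printing Implicit Defensive.
Import Order.TTheory GRing.Theory Num.Theory.
Local Open Scope ring_scope.

Section WD.
Variables (R : realType) (Y : finType).

(* A weighted digraph (Y, E, f): E : rel Y is the edge set (ordered pairs of
   distinct vertices); f : Y -> Y -> R gives the weight of the edges in E
   (its values off E are irrelevant).  If both (a,b) and (b,a) are edges,
   the convention f(b,a) = 1 - f(a,b) must be consistent. *)
Definition is_wdigraph (E : rel Y) (f : Y -> Y -> R) : Prop :=
  (forall a, ~~ E a a) /\
  (forall a b, E a b -> E b a -> f b a = 1 - f a b).

Definition fext (E : rel Y) (f : Y -> Y -> R) (a b : Y) : R :=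
  if E a b then f a b else 1 - f b a.

Definition adj (E : rel Y) : rel Y := fun a b => E a b || E b a.

Definition is_cycle (E : rel Y) (c : seq Y) : bool :=
  [&& (3 <= size c)%N, uniq c & cycle (adj E) c].

Definition curl (E : rel Y) (f : Y -> Y -> R) (c : seq Y) : R :=
  \sum_(p <- zip c (rot 1 c)) fext E f p.1 p.2.

Definition curl_consistent (E : rel Y) (f : Y -> Y -> R) : Prop :=
  is_wdigraph E f /\
  forall c : seq Y, is_cycle E c ->
    1 < curl E f c /\ curl E f c < (size c)%:R - 1.

Definition is_path_from_to (E : rel Y) (u v : Y) (B : seq Y) : bool :=
  [&& uniq B, head u B == u, last u B == v & path (adj E) u (behead B)]
  && (B != [::]).

Definition pweight (E : rel Y) (f : Y -> Y -> R) (B : seq Y) : R :=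
  \sum_(p <- zip B (behead B)) fext E f p.1 p.2.

Definition add_edge_rel (E : rel Y) (ci cj : Y) : rel Y :=
  fun a b => E a b || ((a == ci) && (b == cj)).
Definition add_edge_w (f : Y -> Y -> R) (ci cj : Y) (x : R) : Y -> Y -> R :=
  fun a b => if (a == ci) && (b == cj) then x else f a b.

End WD.

(* Main.v *)
Require Import Defs.
From mathcomp Require Import all_boot all_order all_algebra.
From mathcomp Require Import reals.
Import Order.TTheory GRing.Theory Num.Theory.
Local Open Scope ring_scope.

Lemma sum_cyc (R : realType) (Y : eqType) (F : Y * Y -> R) (s : seq Y) (a b : Y) :
  \sum_(p <- zip (a :: s) (rcons s b)) F p
  = \sum_(p <- zip (a :: s) s) F p + F (last a s, b).
Proof.
elim: s a => [|c s IH] a /=; first by rewrite !big_cons !big_nil add0r addr0.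
by rewrite !big_cons IH addrA.
Qed.

Lemma zip_path (Y : eqType) (e : rel Y) (u : Y) (s : seq Y) :
  path e u s -> all (fun p => e p.1 p.2) (zip (u :: s) s).
Proof.
elim: s u => [|c s IH] u //= /andP [H1 H2].
by rewrite H1 /= IH.
Qed.

Arguments zip_path {Y e u s}.

Theorem lemma2 (R : realType) (Y : finType) (E : rel Y) (f : Y -> Y -> R)
  (ci cj : Y) (x : R) :
  curl_consistent E f ->
  ci != cj -> ~~ E ci cj -> ~~ E cj ci ->
  curl_consistent (add_edge_rel E ci cj) (add_edge_w f ci cj x) ->
  (forall Bb : seq Y, is_path_from_to E cj ci Bb -> 1 - pweight E f Bb < x) /\
  (forall B : seq Y, is_path_from_to E ci cj B -> x < pweight E f B).
Proof.
move=> _ nij nEij nEji [_ CC].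
set E' := add_edge_rel E ci cj.
set f' := add_edge_w f ci cj x.
have nadj : ~~ adj E ci cj /\ ~~ adj E cj ci.
  by rewrite /adj (negbTE nEij) (negbTE nEji).
have E'cjci : E' cj ci = false.
  by rewrite /E' /add_edge_rel (negbTE nEji) eq_sym (negbTE nij).
have key : forall u v B, (u == ci) && (v == cj) || (u == cj) && (v == ci) ->
    is_path_from_to E u v B ->
    exists s, [/\ B = u :: s, pweight E f B = \sum_(p <- zip (u :: s) s) fext E' f' p.1 p.2,
       curl E' f' B = pweight E f B + fext E' f' v u & 1 < curl E' f' B].
  move=> u v B huv /andP [/and4P [Hu Hh Hl Hp] Hn].
  case: B Hu Hh Hl Hp Hn => [|b s] // Hu /= /eqP Hb Hl Hp _; subst b.
  have Hl' : last u s = v by apply/eqP.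
  have Heq : pweight E f (u :: s) = \sum_(p <- zip (u :: s) s) fext E' f' p.1 p.2.
    rewrite /pweight /=; apply: eq_big_seq => p Hpin.
    have := allP (zip_path Hp) p Hpin => Ha.
    case: p Hpin Ha => a b _ /= Ha.
    have Hab : ~~ ((a == ci) && (b == cj)).
      apply/negP => /andP [/eqP ha /eqP hb]; move: Ha; rewrite ha hb.
      by case: nadj => /negbTE ->.
    have Hba : ~~ ((b == ci) && (a == cj)).
      apply/negP => /andP [/eqP ha /eqP hb]; move: Ha; rewrite ha hb.
      by case: nadj => _ /negbTE ->.
    by rewrite /fext /E' /f' /add_edge_rel /add_edge_w (negbTE Hab) (negbTE Hba) orbF.
  have Hcurl : curl E' f' (u :: s) = pweight E f (u :: s) + fext E' f' v u.
    by rewrite /curl rot1_cons (sum_cyc _ _ (fun p => fext E' f' p.1 p.2)) Hl' Heq.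
  exists s; split => //.
  have Hcyc : is_cycle E' (u :: s).
    apply/and3P; split => //.
    - case: s Hl' Hp Hu {Hl Heq Hcurl} => [|c [|d s']] /= Hl' Hp Hu //.
        move: huv nij; rewrite -Hl' => /orP [] /andP [/eqP <- /eqP <-];
        by rewrite eqxx.
      move: huv Hp; rewrite -Hl' andbT => /orP [] /andP [/eqP -> /eqP ->];
      by case: nadj => /negbTE h1 /negbTE h2; rewrite ?h1 ?h2.
    - rewrite /= rcons_path Hl'; apply/andP; split.
        by apply: sub_path Hp => a b; rewrite /adj /E' /add_edge_rel => /orP [] ->; rewrite ?orbT.
      by move: huv => /orP [] /andP [/eqP -> /eqP ->]; rewrite /adj /E' /add_edge_rel !eqxx ?andbT ?orbT.
  by case: (CC _ Hcyc).
have fx : fext E' f' ci cj = x.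
  by rewrite /fext /E' /f' /add_edge_rel /add_edge_w !eqxx orbT.
have fx' : fext E' f' cj ci = 1 - x.
  by rewrite /fext E'cjci /f' /add_edge_w !eqxx.
split.
  move=> Bb HB.
  have [s [_ _ Hc Hlt]] := key cj ci Bb ltac:(by rewrite !eqxx orbT) HB.
  by move: Hlt; rewrite Hc fx ltrBlDr addrC.
move=> B HB.
have [s [_ _ Hc Hlt]] := key ci cj B ltac:(by rewrite !eqxx) HB.
by move: Hlt; rewrite Hc fx' addrCA ltrDl subr_gt0.
Qed.
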